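(* Let $10\le n\le 12$, and let $\frac{p_1}{q_1},\frac{p_2}{q_2},\frac{p_3}{q_3},\dots$ be the convergents (in lowest terms) of the simple continued fraction expansion of $\sqrt n$, indexed so that $\frac{p_1}{q_1}=\frac31$. (1) For each positive odd integer $k$, set $d_k=\frac12(p_k-3)$, $m_k=\frac12(q_k-1)$ and $D_k=d_kH-m_kE$. Then $D_k$ is an integral effective divisor class with $\chi(D_k)=1$ and $2B\cdot D_k<B\cdot K$. (2) If $D$ is an effective divisor class with $\chi(D)\ge1$ and there is an ample divisor $A_t$ with $2A_t\cdot D<A_t\cdot K$, then $D=D_k$ for some positive odd integer $k$.
   Context: Let $X$ be the blowup of $\mathbb{P}^2_{\mathbb{C}}$ at $n$ very general points, with $H$ the pullback of a line class, $E_i$ the exceptional divisors, $E=\sum_iE_i$, and $K=K_X=-3H+E$. For real $t$, $A_t=tH-E$, and $B=\sqrt nH-E$. Write $\chi(D)=\chi(\mathcal{O}_X(D))$; effective means the class of an effective divisor (zero allowed). *)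

(* Defs.v *)
From mathcomp Require Import all_boot all_order all_algebra.
From mathcomp Require Import Rstruct.
From mathcomp.real_closed Require Import complex.
From mathcomp Require Import mpoly.
Import GRing.Theory Num.Theory.

Set Implicit Arguments.
Unset Strict Implicit.
Unset Printing Implicit Defensive.

Local Open Scope ring_scope.

Definition RR : Type := Rdefinitions.R.
Definition CC : Type := (Rdefinitions.R)[i].

(* Divisor classes on X = Bl_{p_1..p_n} P^2.  Pic X = Z H + sum Z E_i. *)
(* A (real) class  a H - sum_i u_i E_i  is represented by (a, u).      *)
(* Intersection form: H^2 = 1, E_i^2 = -1, H.E_i = 0, E_i.E_j = 0.     *)
Definition dot (n : nat) (a : RR) (u : 'I_n -> RR) (b : RR) (v : 'I_n -> RR)
  : RR := a * b - \sum_(i < n) u i * v i.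

Definition rdeg (d : int) : RR := d%:~R.
Definition rmul (n : nat) (m : 'I_n -> int) : 'I_n -> RR := fun i => (m i)%:~R.

(* K = -3H + E = -3 H - sum_i (-1) E_i *)
Definition K_deg : RR := -3.
Definition K_mul (n : nat) : 'I_n -> RR := fun _ => -1.

(* E = sum_i E_i, so A_t = tH - E and B = sqrt(n) H - E have all u_i = 1 *)
Definition E_mul (n : nat) : 'I_n -> RR := fun _ => 1.
Definition B_deg (n : nat) : RR := Num.sqrt (n%:R).

(* Euler characteristic chi(O_X(D)) via Riemann-Roch on the rational
   surface X (chi(O_X) = 1):  chi(D) = 1 + (D.D - D.K)/2.              *)
Definition chi (n : nat) (d : int) (m : 'I_n -> int) : RR :=
  1 + (dot (rdeg d) (rmul m) (rdeg d) (rmul m)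
       - dot (rdeg d) (rmul m) K_deg (@K_mul n)) / 2.

(* Effectivity.  The points p_i = (X i, Y i) lie in the affine chart   *)
(* C^2 of P^2.  A class d H - sum m_i E_i is effective iff there is a  *)
(* nonzero plane curve of degree d (dehomogenized: a nonzero           *)
(* polynomial of total degree <= d) with multiplicity >= max(m_i,0) at *)
(* each p_i.                                                           *)

(* f vanishes to order >= k at (a,b): all monomials of degree < k of
   f(x + a, y + b) have zero coefficient *)
Definition mult_ge (f : {mpoly CC[2]}) (a b : CC) (k : nat) : Prop :=
  forall mo : 'X_{1..2}, (mdeg mo < k)%N ->
    (f \mPo [tuple 'X_0 + a%:MP; 'X_1 + b%:MP])@_mo = 0.

Definition effective (n : nat) (X Y : 'I_n -> CC) (d : int) (m : 'I_n -> int)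
  : Prop :=
  exists f : {mpoly CC[2]},
    f != 0 /\ ((msize f)%:Z <= d + 1) /\
    forall i : 'I_n, mult_ge f (X i) (Y i) (absz (Num.max (m i) 0)).

(* Ampleness of the real divisor class a H - sum u_i E_i, via the
   Nakai-Moishezon criterion for R-divisors on a surface: D^2 > 0 and
   D.C > 0 for every curve C (equivalently every nonzero effective class). *)
Definition ample (n : nat) (X Y : 'I_n -> CC) (a : RR) (u : 'I_n -> RR) : Prop :=
  0 < dot a u a u /\
  forall (d : int) (m : 'I_n -> int), effective X Y d m ->
    ~ (d = 0 /\ forall i, m i = 0) ->
    0 < dot a u (rdeg d) (rmul m).

(* Very general configurations of n points: the property holds outside *)
(* a countable union of proper Zariski-closed subsets of (C^2)^n, i.e. *)
(* outside the union of the zero sets of countably many nonzero        *)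
(* polynomials in the 2n coordinates.                                  *)
Definition coords (n : nat) (X Y : 'I_n -> CC) : 'I_(n + n) -> CC :=
  fun j => match split j with inl i => X i | inr i => Y i end.

Definition very_general (n : nat) (P : ('I_n -> CC) -> ('I_n -> CC) -> Prop)
  : Prop :=
  exists F : nat -> {mpoly CC[n + n]},
    (forall j, F j != 0) /\
    forall X Y : 'I_n -> CC,
      (forall j, (F j).@[coords X Y] != 0) -> P X Y.

(* Simple continued fraction of a real x: x_0 = x, x_{k+1} = 1/(x_k -  *)
(* floor x_k), a_k = floor x_k.  Convergents P_k/Q_k with P_0 = 1,     *)
(* Q_0 = 0, P_1 = a_0, Q_1 = 1, P_{k+1} = a_k P_k + P_{k-1}, etc., so  *)
(* that P_1/Q_1 = a_0/1 (the paper's indexing: p_1/q_1 = 3/1).         *)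
Fixpoint cf_rem (x : RR) (k : nat) : RR :=
  match k with
  | 0 => x
  | k'.+1 => (cf_rem x k' - (Num.floor (cf_rem x k'))%:~R)^-1
  end.

Definition cf_a (x : RR) (k : nat) : int := Num.floor (cf_rem x k).

(* cf_PQ x k = ((P_k, Q_k), (P_{k+1}, Q_{k+1})) *)
Fixpoint cf_PQ (x : RR) (k : nat) : (int * int) * (int * int) :=
  match k with
  | 0 => ((1, 0), (cf_a x 0, 1))
  | k'.+1 =>
      let: ((p0, q0), (p1, q1)) := cf_PQ x k' in
      ((p1, q1), (cf_a x k * p1 + p0, cf_a x k * q1 + q0))
  end.

Definition conv_p (x : RR) (k : nat) : int := (cf_PQ x k).1.1.
Definition conv_q (x : RR) (k : nat) : int := (cf_PQ x k).1.2.

Definition dk (n k : nat) : int := ((conv_p (Num.sqrt (n%:R)) k - 3) %/ 2)%Z.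
Definition mk (n k : nat) : int := ((conv_q (Num.sqrt (n%:R)) k - 1) %/ 2)%Z.

(* Main.v *)
Require Import Defs.
From mathcomp Require Import all_boot all_order all_algebra.
From mathcomp Require Import Rstruct.
From mathcomp.real_closed Require Import complex.
From mathcomp Require Import mpoly.
From mathcomp Require Import ring lra zify.
Import Order.TTheory GRing.Theory Num.Theory.

Lemma sum_lt_min (k b : nat) : \sum_(c < b) (c < k : nat) = minn k b.
Proof.
elim: b => [|b IH]; first by rewrite big_ord0 minn0.
rewrite big_ord_recr /= IH.
case: (ltnP b k) => h /=; lia.
Qed.

Lemma sum_sub2 (b : nat) : (\sum_(a < b) (b - a)) * 2 = b * b.+1.
Proof.
elim: b => [|b IH]; first by rewrite big_ord0.
rewrite big_ord_recl /= subn0.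
rewrite (eq_bigr (fun a : 'I_b => b - a)); last by move=> i _; rewrite /bump /= subSS.
rewrite mulnDl IH; lia.
Qed.

Lemma card_tri (b : nat) : #|[pred p : 'I_b * 'I_b | p.1 + p.2 < b]| * 2 = b * b.+1.
Proof.
rewrite -sum1_card big_mkcond /=.
rewrite -(pair_big xpredT xpredT (fun (a c : 'I_b) => if a + c < b then 1 else 0)) /=.
rewrite -sum_sub2; congr (_ * 2); apply: eq_bigr => a _.
rewrite (eq_bigr (fun c : 'I_b => (c < b - a : nat))); last first.
  by move=> c _; rewrite ltn_subRL; case: ifP.
rewrite sum_lt_min; lia.
Qed.

Lemma card_sig_tri (b : nat) : #|{: {p : 'I_b * 'I_b | p.1 + p.2 < b}}| * 2 = b * b.+1.
Proof. by rewrite card_sig card_tri. Qed.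

Local Open Scope ring_scope.
Lemma ker_nonzero (F : fieldType) (m n : nat) (A : 'M[F]_(m, n)) :
  (n < m)%N -> exists v : 'rV[F]_m, v != 0 /\ v *m A = 0.
Proof.
move=> hnm.
have hr : (0 < \rank (kermx A))%N.
  by rewrite mxrank_ker subn_gt0; apply: leq_ltn_trans (rank_leq_col A) hnm.
have hK : kermx A != 0.
  by apply/eqP => h; move: hr; rewrite h mxrank0.
case/boolP: [exists i, row i (kermx A) != 0] => [/existsP [i hi] | /existsPn hall].
  by exists (row i (kermx A)); split => //; rewrite -row_mul mulmx_ker row0.
case/eqP: hK; apply/row_matrixP => i; rewrite row0; exact/eqP/negPn/hall.
Qed.

Definition mon (a b : nat) : 'X_{1..2} := [multinom [tuple a; b]].

Lemma mon0 a b : mon a b ord0 = a. Proof. by rewrite mnm_tnth. Qed.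
Lemma mon1 a b : mon a b (lift ord0 ord0) = b. Proof. by rewrite mnm_tnth. Qed.

Lemma mon_inj a b a' b' : mon a b = mon a' b' -> a = a' /\ b = b'.
Proof. by move=> h; split; [rewrite -(mon0 a b) h mon0 | rewrite -(mon1 a b) h mon1]. Qed.

Lemma monE (mo : 'X_{1..2}) : mo = mon (mo ord0) (mo (lift ord0 ord0)).
Proof.
apply/mnmP => i.
have [->|->] : i = ord0 \/ i = lift ord0 ord0.
  by case: i => [[|[|]]] //= hi; [left|right]; apply: val_inj.
- by rewrite mon0.
- by rewrite mon1.
Qed.

Lemma mdeg2 (mo : 'X_{1..2}) : mdeg mo = (mo ord0 + mo (lift ord0 ord0))%N.
Proof. by rewrite mdegE big_ord_recl big_ord_recl big_ord0 addn0. Qed.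

Lemma mdeg_mon a b : mdeg (mon a b) = (a + b)%N.
Proof. by rewrite mdeg2 mon0 mon1. Qed.

Lemma effective_exists (N : nat) (X Y : 'I_N -> CC) (d m : nat) :
  (N * (m * m.+1) < d.+1 * d.+2)%N -> effective X Y d%:Z (fun _ => m%:Z).
Proof.
move=> hlt.
pose Dom := {p : 'I_d.+1 * 'I_d.+1 | (p.1 + p.2 < d.+1)%N}.
pose Q := {p : 'I_m * 'I_m | (p.1 + p.2 < m)%N}.
pose Cod := ('I_N * Q)%type.
pose monD (p : Dom) := mon (val p).1 (val p).2.
pose monQ (q : Q) := mon (val q).1 (val q).2.
pose sh (i : 'I_N) : 2.-tuple {mpoly CC[2]} := [tuple 'X_0 + (X i)%:MP; 'X_1 + (Y i)%:MP].
pose coef (p : Dom) (c : Cod) : CC := ('X_[monD p] \mPo sh c.1)@_(monQ c.2).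
pose A : 'M[CC]_(#|{: Dom}|, #|{: Cod}|) := \matrix_(r, s) coef (enum_val r) (enum_val s).
have hcard : (#|{: Cod}| < #|{: Dom}|)%N.
  have h1 := card_sig_tri d.+1. have h2 := card_sig_tri m.
  rewrite card_prod card_ord.
  rewrite -(ltn_pmul2r (_ : 0 < 2)%N) //.
  rewrite -mulnA h2 h1; exact: hlt.
have [v [vnz vA]] := @ker_nonzero _ _ _ A hcard.
pose f : {mpoly CC[2]} := \sum_(r < #|{: Dom}|) v ord0 r *: 'X_[monD (enum_val r)].
exists f; split; [|split].
-
  have [r0 hr0] : exists r0, v ord0 r0 != 0.
    case/boolP: [exists r, v ord0 r != 0] => [/existsP//|/existsPn hall].
    case/eqP: vnz; apply/rowP => r; rewrite !mxE; exact/eqP/negPn/hall.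
  apply/eqP => hf.
  have := congr1 (mcoeff (monD (enum_val r0))) hf.
  rewrite mcoeff0 raddf_sum (bigD1 r0) //= big1 ?addr0.
    by rewrite mcoeffZ mcoeffX eqxx mulr1 => h; rewrite h eqxx in hr0.
  move=> r hr; rewrite mcoeffZ mcoeffX; case: eqP => [h|]; last by rewrite mulr0.
  exfalso; move/negP: hr; apply; apply/eqP; apply: enum_val_inj.
  move: h; rewrite /monD => /mon_inj [h1 h2].
  apply: val_inj; move: (val (enum_val r)) (val (enum_val r0)) h1 h2 => [a b] [a' b'] /= h1 h2.
  by congr (_, _); apply: val_inj.
-
  have -> : d%:Z + 1 = (d.+1)%:Z by rewrite -addn1 PoszD.
  rewrite lez_nat.
  apply: (big_ind (fun p : {mpoly CC[2]} => msize p <= d.+1)%N).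
  + by rewrite msize0.
  + by move=> p q hp hq; apply: leq_trans (msizeD_le p q) _; rewrite geq_max hp hq.
  + move=> r _; apply: leq_trans (mmeasureZ_le _ _ _) _.
    by rewrite msizeX /monD mdeg_mon; case: (enum_val r) => /= [[a b] /= hab].
-
  move=> i; rewrite /mult_ge.
  have -> : absz (Num.max m%:Z 0) = m by rewrite max_l.
  move=> mo hmo.
  rewrite mdeg2 in hmo.
  have h0 : (mo ord0 < m)%N by lia.
  have h1 : (mo (lift ord0 ord0) < m)%N by lia.
  pose q : Q := exist _ (Ordinal h0, Ordinal h1) hmo.
  pose c : Cod := (i, q).
  have := congr1 (fun M : 'rV_#|{: Cod}| => M ord0 (enum_rank c)) vA.
  rewrite /= !mxE => <-.
  rewrite /f (big_morph _ (comp_mpolyD _) (comp_mpoly0 _)) (big_morph _ (mcoeffD mo) (mcoeff0 _ mo)) /=.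
  apply: eq_bigr => r _; rewrite !mxE enum_rankK /coef /=.
  rewrite comp_mpolyZ mcoeffZ; congr (_ * _).
  by rewrite [in LHS](monE mo).
Qed.

Section CF.
Variables (n : nat) (c e : int).
Hypothesis hn : (10 <= n <= 12)%N.
Hypothesis hc : n%:Z = 9 + c.
Hypothesis hce : c * e = 6.

Let s : RR := Num.sqrt (n%:R).

Lemma s_sq : s ^+ 2 = n%:R.
Proof. by rewrite sqr_sqrtr // ler0n. Qed.

Lemma s_ge0 : 0 <= s.
Proof. exact: sqrtr_ge0. Qed.

Lemma c_bounds : 1 <= c <= 3.
Proof. lia. Qed.

Lemma e_val : (c = 1 /\ e = 6) \/ (c = 2 /\ e = 3) \/ (c = 3 /\ e = 2).
Proof. have h := hce. have : c = 1 \/ c = 2 \/ c = 3 by lia.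
by case=> [E|[E|E]]; rewrite E in h; lia. Qed.

Lemma cR : (c%:~R : RR) = n%:R - 9.
Proof. have -> : c = n%:Z - 9 by lia. by rewrite intrB. Qed.

Lemma s_bounds : 3 < s < 4.
Proof.
have h := s_sq. have h0 := s_ge0.
have : (10%:R : RR) <= (n%:R : RR) <= (12%:R : RR).
  by move/andP: hn => [a b]; rewrite !ler_nat a b.
move=> /andP[a b]; apply/andP; split; nra.
Qed.

Lemma floor_s : Num.floor s = 3.
Proof.
apply/eqP; rewrite floor_eq; have /andP[a b] := s_bounds.
apply/andP; split; rewrite ?intrD /=; lra.
Qed.

Lemma floor_s3 : Num.floor (s + 3) = 6.
Proof.
apply/eqP; rewrite floor_eq; have /andP[a b] := s_bounds.
apply/andP; split; rewrite ?intrD /=; lra.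
Qed.

Lemma floor_r1 : Num.floor ((s + 3) / c%:~R) = e.
Proof.
have /andP[a b] := s_bounds.
apply/eqP; rewrite floor_eq.
have [[-> ->]|[[-> ->]|[-> ->]]] := e_val; apply/andP; split; rewrite /=;
 rewrite ?ler_pdivlMr ?ltr_pdivrMr //; lra.
Qed.

Lemma cf_rem_odd j : cf_rem s j.*2.+1 = (s + 3) / c%:~R.
Proof.
have /andP[a b] := s_bounds. have hs := s_sq.
have cpos : (0 : RR) < c%:~R by rewrite ltr0z; lia.
have cE : (c%:~R : RR) = s ^+ 2 - 9 by rewrite hs cR.
elim: j => [|j IH].
  rewrite /= floor_s; rewrite cE. change (3%:~R : RR) with (3 : RR). field.
  by rewrite -cE (gt_eqF cpos) /= subr_eq0 gt_eqF.
change (cf_rem s (j.*2.+3) = (s + 3) / c%:~R).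
rewrite /= -/(cf_rem s j.*2.+1) IH floor_r1.
have hce' : (c%:~R : RR) * e%:~R = 6 by rewrite -intrM hce.
have eE : (e%:~R : RR) = 6 / c%:~R.
  by rewrite -hce' mulrAC divff ?mul1r // (gt_eqF cpos).
have r2 : ((s + 3) / c%:~R - e%:~R)^-1 = s + 3.
  rewrite eE cE; field.
  by apply/andP; split; apply: lt0r_neq0; nra.
rewrite r2 floor_s3.
change (6%:~R : RR) with (6 : RR).
rewrite cE; field.
by apply/andP; split; apply: lt0r_neq0; nra.
Qed.

Lemma cf_rem_even j : cf_rem s j.*2.+2 = s + 3.
Proof.
have /andP[a b] := s_bounds. have hs := s_sq.
have cpos : (0 : RR) < c%:~R by rewrite ltr0z; lia.
have cE : (c%:~R : RR) = s ^+ 2 - 9 by rewrite hs cR.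
rewrite /= -/(cf_rem s j.*2.+1) cf_rem_odd floor_r1.
have hce' : (c%:~R : RR) * e%:~R = 6 by rewrite -intrM hce.
have eE : (e%:~R : RR) = 6 / c%:~R.
  by rewrite -hce' mulrAC divff ?mul1r // (gt_eqF cpos).
rewrite eE cE; field.
by apply/andP; split; apply: lt0r_neq0; nra.
Qed.

Lemma cf_a0 : cf_a s 0 = 3.
Proof. exact: floor_s. Qed.
Lemma cf_a_odd j : cf_a s j.*2.+1 = e.
Proof. by rewrite /cf_a cf_rem_odd floor_r1. Qed.
Lemma cf_a_even j : cf_a s j.*2.+2 = 6.
Proof. by rewrite /cf_a cf_rem_even floor_s3. Qed.

End CF.


Definition Ustep (e : int) (pq : int * int) : int * int :=
  ((3 * e + 1) * pq.1 + (9 * e + 6) * pq.2, e * pq.1 + (3 * e + 1) * pq.2).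

Fixpoint useq (e : int) (j : nat) : int * int :=
  match j with 0 => (3, 1) | j'.+1 => Ustep e (useq e j') end.

Lemma descent (U : int * int -> int * int) (P : int -> int -> Prop) (u : nat -> int * int) :
  u 0%N = (3, 1) -> (forall j, u j.+1 = U (u j)) ->
  (forall p q, 0 < p -> 0 < q -> P p q -> q = 1 -> p = 3) ->
  (forall p q, 0 < p -> 1 < q -> P p q -> exists p0 q0,
      0 < p0 /\ 0 < q0 /\ q0 < q /\ P p0 q0 /\ U (p0, q0) = (p, q)) ->
  forall p q, 0 < p -> 0 < q -> P p q -> exists j, u j = (p, q).
Proof.
move=> u0 uS H1 H2.
suff: forall N p q, (absz q < N)%N -> 0 < p -> 0 < q -> P p q -> exists j, u j = (p, q).
  by move=> H p q; apply: (H (absz q).+1).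
elim=> [|N IH] p q; first by [].
move=> hN hp hq hP.
have [q1|q1] := eqVneq q 1.
  by exists 0%N; rewrite u0 (H1 p q) // q1.
have hq' : 1 < q by lia.
have [p0 [q0 [h0 [h1 [h2 [h3 h4]]]]]] := H2 p q hp hq' hP.
have [|j hj] := IH p0 q0 _ h0 h1 h3; first lia.
by exists j.+1; rewrite uS hj.
Qed.

Lemma pell_case (c e : int) (U := Ustep e) :
  (c = 1 /\ e = 6) \/ (c = 2 /\ e = 3) \/ (c = 3 /\ e = 2) ->
  (forall j, let pq := useq e j in
     pq.1 * pq.1 - (9 + c) * (pq.2 * pq.2) = - c /\ 3 <= pq.1 /\ 1 <= pq.2 /\
     (exists a, pq.1 = 2 * a + 1) /\ (exists b, pq.2 = 2 * b + 1)) /\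
  (forall p q, 0 < p -> 0 < q -> p * p - (9 + c) * (q * q) = - c ->
     exists j, useq e j = (p, q)).
Proof.
move=> ev; split.
  elim=> [|j [IH1 [IH2 [IH3 [[a Ha] [b Hb]]]]]] /=.
    split; first lia.
    by split; [|split; [|split; [exists 1|exists 0]]].
  rewrite /Ustep /=; case: (useq e j) IH1 IH2 IH3 Ha Hb => p q /= IH1 IH2 IH3 Ha Hb.
  case: ev => [[C E]|[[C E]|[C E]]]; rewrite C E in IH1 *.
  - split; first nia. split; first nia. split; first nia.
    by split; [exists (19 * a + 60 * b + 39)| exists (6 * a + 19 * b + 12)]; lia.
  - split; first nia. split; first nia. split; first nia.
    by split; [exists (10 * a + 33 * b + 21)| exists (3 * a + 10 * b + 6)]; lia.
  - split; first nia. split; first nia. split; first nia.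
    by split; [exists (7 * a + 24 * b + 15)| exists (2 * a + 7 * b + 4)]; lia.
apply: (@descent (Ustep e) _ (useq e)) => //.
- by move=> p q hp hq h q1; rewrite q1 in h; nia.
- move=> p q hp hq h.
  have h3 : 3 * q < p.
    have [//|hle] := ltrP (3 * q) p.
    have : p * p <= 9 * (q * q) by nia.
    case: ev => [[C E]|[[C E]|[C E]]]; rewrite C in h; nia.
  case: ev => [[C E]|[[C E]|[C E]]]; rewrite C in h; rewrite E /Ustep /=.
  + exists (19 * p - 60 * q), (19 * q - 6 * p).
    split.
      have [//|hle] := ltrP 0 (19 * p - 60 * q).
      have : q <= 6 by nia.
      lia.
    split; first nia. split; first lia. split; first nia.
    congr (_, _); lia.
  + exists (10 * p - 33 * q), (10 * q - 3 * p).
    split.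
      have [//|hle] := ltrP 0 (10 * p - 33 * q).
      have h4 : q <= 4 by nia.
      have [E1 E2] : q = 4 /\ p = 13 by lia.
      rewrite E1 E2 in h. lia.
    split; first nia. split; first lia. split; first nia.
    congr (_, _); lia.
  + exists (7 * p - 24 * q), (7 * q - 2 * p).
    split.
      have [//|hle] := ltrP 0 (7 * p - 24 * q).
      have h4 : q <= 3 by nia.
      have [E1 E2] : q = 3 /\ p = 10 by lia.
      rewrite E1 E2 in h. lia.
    split; first nia. split; first lia. split; first nia.
    congr (_, _); lia.
Qed.
Lemma conv_odd (n : nat) (c e : int) : (10 <= n <= 12)%N -> n%:Z = 9 + c -> c * e = 6 ->
  forall j, exists p' q' : int,
    cf_PQ (Num.sqrt (n%:R)) j.*2.+1 = (useq e j, (p', q')) /\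
    c * p' = 3 * (useq e j).1 + n%:Z * (useq e j).2 /\
    c * q' = (useq e j).1 + 3 * (useq e j).2.
Proof.
move=> hn hc hce.
have ev := @e_val n c e hn hc hce.
elim=> [|j [p' [q' [E [h1 h2]]]]].
2: change (j.+1.*2.+1) with (j.*2.+3).
  1: exists (cf_a (Num.sqrt n%:R) 1 * 3 + 1), (cf_a (Num.sqrt n%:R) 1 * 1 + 0).
  rewrite /= -/(cf_a _ 0) (@cf_a0 n hn) -[1%N]/(0.*2.+1) (@cf_a_odd n c e hn hc hce 0) hc.
  split => //.
  by case: ev => [[-> ->]|[[-> ->]|[-> ->]]]; split; lia.
change (cf_PQ (Num.sqrt n%:R) (j.*2.+3)) with
  (let: ((p0, q0), (p1, q1)) := cf_PQ (Num.sqrt n%:R) (j.*2.+2) in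
      ((p1, q1), (cf_a (Num.sqrt n%:R) (j.*2.+3) * p1 + p0,
                  cf_a (Num.sqrt n%:R) (j.*2.+3) * q1 + q0))).
change (cf_PQ (Num.sqrt n%:R) (j.*2.+2)) with
  (let: ((p0, q0), (p1, q1)) := cf_PQ (Num.sqrt n%:R) (j.*2.+1) in
      ((p1, q1), (cf_a (Num.sqrt n%:R) (j.*2.+2) * p1 + p0,
                  cf_a (Num.sqrt n%:R) (j.*2.+2) * q1 + q0))).
rewrite E -/(useq e j) [useq e j.+1]/= /Ustep.
case: (useq e j) h1 h2 => p q /= h1 h2.
rewrite (@cf_a_even n c e hn hc hce j) -[j.*2.+3]/((j.+1).*2.+1) (@cf_a_odd n c e hn hc hce j.+1).
rewrite /Ustep /=.
rewrite hc in h1 h2 *.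
case: ev => [[C Ee]|[[C Ee]|[C Ee]]]; rewrite C Ee in h1 h2 *.
- exists (6 * (6 * p' + p) + p'), (6 * (6 * q' + q) + q'); split; [congr (_, _); congr (_, _)|]; lia.
- exists (3 * (6 * p' + p) + p'), (3 * (6 * q' + q) + q'); split; [congr (_, _); congr (_, _)|]; lia.
- exists (2 * (6 * p' + p) + p'), (2 * (6 * q' + q) + q'); split; [congr (_, _); congr (_, _)|]; lia.
Qed.

Lemma lagrange (n : nat) (m : 'I_n -> int) :
  \sum_i \sum_j (m i - m j) * (m i - m j) =
  2 * (n%:Z * (\sum_i m i * m i) - (\sum_i m i) * (\sum_i m i)).
Proof.
set Sq := \sum_i m i * m i; set M := \sum_i m i.
have inner i : \sum_j (m i - m j) * (m i - m j) = n%:Z * (m i * m i) + Sq - 2 * m i * M.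
  rewrite (eq_bigr (fun j => m i * m i + m j * m j - 2 * m i * m j)); last by move=> j _; ring.
  rewrite sumrB big_split /= sumr_const card_ord -/Sq -mulr_sumr -/M.
  by rewrite -[m i * m i *+ n]mulr_natl natz.
rewrite (eq_bigr _ (fun i _ => inner i)).
rewrite sumrB big_split /= sumr_const card_ord -mulr_sumr -/Sq -mulr_suml -/M.
rewrite -[Sq *+ n]mulr_natl natz; rewrite -mulr_sumr -/M; ring.
Qed.

Lemma sum_sq_ge0 (n : nat) (m : 'I_n -> int) :
  0 <= n%:Z * (\sum_i m i * m i) - (\sum_i m i) * (\sum_i m i).
Proof.
have : 0 <= \sum_i \sum_j (m i - m j) * (m i - m j).
  by apply: sumr_ge0 => i _; apply: sumr_ge0 => j _; by rewrite -expr2 sqr_ge0.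
rewrite lagrange; lia.
Qed.

Lemma uniform_of (n : nat) (m : 'I_n -> int) (a : 'I_n) :
  n%:Z * (\sum_i m i * m i) - (\sum_i m i) * (\sum_i m i) < n%:Z - 1 ->
  forall i, m i = m a.
Proof.
move=> hV b; apply/eqP; apply/negPn/negP => hb.
pose A i : int := (m i == m a)%:R.
pose B i : int := (m i != m a)%:R.
have pt i j : A i * B j + B i * A j <= (m i - m j) * (m i - m j).
  rewrite /A /B; case: (eqVneq (m i) (m a)) => Ei; case: (eqVneq (m j) (m a)) => Ej /=;
    rewrite ?mul0r ?mulr0 ?mul1r ?mulr1 ?addr0 ?add0r; try (by rewrite -expr2 sqr_ge0);
    (have [h|h] : m i - m j < 0 \/ 0 < m i - m j by (move/eqP: Ej; move/eqP: Ei; lia)); nia.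
have low : \sum_i \sum_j (A i * B j + B i * A j) <= \sum_i \sum_j (m i - m j) * (m i - m j).
  by apply: ler_sum => x _; apply: ler_sum => y _; apply: pt.
rewrite lagrange in low.
have split2 : \sum_i \sum_j (A i * B j + B i * A j) = 2 * ((\sum_i A i) * (\sum_i B i)).
  rewrite (eq_bigr (fun i => A i * \sum_j B j + B i * \sum_j A j)); last first.
    by move=> i _; rewrite big_split /= !mulr_sumr.
  rewrite big_split /= -!mulr_suml; ring.
have AB : \sum_i A i + \sum_i B i = n%:Z.
  rewrite -big_split /= (eq_bigr (fun _ => 1)); last by move=> i _; rewrite /A /B; case: eqP.
  by rewrite sumr_const card_ord natz.
have A1 : 1 <= \sum_i A i.
  rewrite (bigD1 a) //= {1}/A eqxx /= lerDl.
  by apply: sumr_ge0 => i _; rewrite /A; case: eqP.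
have B1 : 1 <= \sum_i B i.
  rewrite (bigD1 b) //= {1}/B hb /= lerDl.
  by apply: sumr_ge0 => i _; rewrite /B; case: eqP.
rewrite split2 in low.
nia.
Qed.

Lemma intr_sum (n : nat) (F : 'I_n -> int) :
  ((\sum_i F i)%:~R : RR) = \sum_i (F i)%:~R.
Proof.
apply: (big_rec2 (fun (x : int) (y : RR) => x%:~R = y)) => // i a b _ <-.
by rewrite intrD.
Qed.

Lemma dot_E (n : nat) (t : RR) (d : int) (m : 'I_n -> int) :
  dot t (@E_mul n) (rdeg d) (rmul m) = t * d%:~R - (\sum_i m i)%:~R.
Proof.
rewrite /dot intr_sum; congr (_ - _); apply: eq_bigr => i _.
by rewrite /E_mul /rmul mul1r.
Qed.

Lemma dot_EE (n : nat) (t : RR) : dot t (@E_mul n) t (@E_mul n) = t * t - n%:R.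
Proof.
rewrite /dot (eq_bigr (fun _ => 1)); last by move=> i _; rewrite /E_mul mulr1.
by rewrite sumr_const card_ord.
Qed.

Lemma dot_EK (n : nat) (t : RR) : dot t (@E_mul n) K_deg (@K_mul n) = -3 * t + n%:R.
Proof.
rewrite /dot (eq_bigr (fun _ => -1)); last by move=> i _; rewrite /E_mul /K_mul mul1r.
rewrite sumr_const card_ord /K_deg -mulNrn; ring.
Qed.

Lemma chiE (n : nat) (d : int) (m : 'I_n -> int) :
  chi d m = 1 + (d%:~R * d%:~R - (\sum_i m i * m i)%:~R + 3 * d%:~R - (\sum_i m i)%:~R) / 2.
Proof.
rewrite /chi /dot !intr_sum.
rewrite (eq_bigr (fun i => ((m i * m i)%:~R : RR))); last by move=> i _; rewrite /rmul intrM.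
under [\sum_i rmul m i * K_mul i]eq_bigr => i _ do rewrite /K_mul mulrN1.
rewrite sumrN /rdeg /K_deg; congr (1 + _ / 2); ring.
Qed.

Lemma sum_const_int (n : nat) (x : int) : \sum_(i < n) x = n%:Z * x.
Proof. by rewrite sumr_const card_ord -mulr_natl natz. Qed.

Lemma effective_H (n : nat) (X Y : 'I_n -> CC) : effective X Y 1 (fun _ => 0).
Proof.
exists 1; split; first exact: oner_neq0.
split; first by rewrite msize1.
by move=> i mo; rewrite max_l.
Qed.

Lemma effective_dge0 (n : nat) (X Y : 'I_n -> CC) d m : effective X Y d m -> 0 <= d.
Proof.
case=> f [fnz [hs _]].
have : (0 < msize f)%N by rewrite lt0n msize_poly_eq0.
lia.
Qed.

Lemma nval (n : nat) : (10 <= n <= 12)%N ->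
  exists c e : int, n%:Z = 9 + c /\ c * e = 6.
Proof.
move=> hn.
have : n = 10%N \/ n = 11%N \/ n = 12%N by lia.
case=> [->|[->|->]]; [exists 1, 6|exists 2, 3|exists 3, 2]; by [].
Qed.

Lemma part1 (n : nat) (hn : (10 <= n <= 12)%N) (X Y : 'I_n -> CC) (k : nat) : odd k ->
       (2 %| conv_p (Num.sqrt (n%:R)) k - 3)%Z /\
       (2 %| conv_q (Num.sqrt (n%:R)) k - 1)%Z /\
       effective X Y (dk n k) (fun _ => mk n k) /\
       chi (dk n k) (fun _ : 'I_n => mk n k) = 1 /\
       2 * dot (B_deg n) (@E_mul n) (rdeg (dk n k)) (rmul (fun _ : 'I_n => mk n k))
         < dot (B_deg n) (@E_mul n) K_deg (@K_mul n).
Proof.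
move=> hk.
have [c [e [hc hce]]] := @nval n hn.
have ev := @e_val n c e hn hc hce.
have [Pfwd _] := @pell_case c e ev.
have kE : k = (k./2).*2.+1 by rewrite -[k in LHS]odd_double_half hk.
set j := k./2 in kE.
have [p' [q' [E _]]] := @conv_odd n c e hn hc hce j.
have [Nm [p3 [q1 [[a Ha] [b Hb]]]]] := Pfwd j.
move: E Nm p3 q1 Ha Hb; case: (useq e j) => p q E /= Nm p3 q1 Ha Hb.
have cp : conv_p (Num.sqrt n%:R) k = p by rewrite /conv_p kE E.
have cq : conv_q (Num.sqrt n%:R) k = q by rewrite /conv_q kE E.
have dkE : dk n k = a - 1.
  by rewrite /dk cp Ha (_ : 2 * a + 1 - 3 = (a - 1) * 2) ?mulzK //; ring.
have mkE : mk n k = b.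
  by rewrite /mk cq Hb (_ : 2 * b + 1 - 1 = b * 2) ?mulzK //; ring.
rewrite dkE mkE cp cq Ha Hb.
have rel : (a - 1) * (a - 1) + 3 * (a - 1) - n%:Z * (b * b) - n%:Z * b = 0.
  rewrite hc; rewrite Ha Hb in Nm; nia.
split; first by rewrite (_ : 2 * a + 1 - 3 = (a - 1) * 2) ?dvdz_mull //; ring.
split; first by rewrite (_ : 2 * b + 1 - 1 = b * 2) ?dvdz_mull //; ring.
split.
  have ha : 1 <= a by lia.
  have hb : 0 <= b by lia.
  have [dn hdn] : exists dn : nat, a - 1 = dn%:Z by exists `|a - 1|%N; lia.
  have [mn hmn] : exists mn : nat, b = mn%:Z by exists `|b|%N; lia.
  rewrite hdn hmn; apply: effective_exists.
  rewrite hdn hmn in rel.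
  rewrite -ltz_nat !PoszM; rewrite hc in rel *; nia.
split.
  rewrite chiE.
  rewrite (sum_const_int n (b * b)) (sum_const_int n b).
  have := congr1 (fun z : int => (z%:~R : RR)) rel.
  rewrite /= !(intrD, intrM, intrB, intrN) /=.
  have f1 : (1%:~R : RR) = 1 := erefl. have fm1 : ((-1)%:~R : RR) = -1 := erefl.
  have f0 : (0%:~R : RR) = 0 := erefl.
  rewrite ?f1 ?fm1 ?f0 => h.
  rewrite ?intrM ?(intrD, intrB, intrN) ?f1 ?fm1 ?f0.
  lra.
rewrite !dot_E dot_EK sum_const_int /B_deg.
set s := Num.sqrt (n%:R : RR).
have hs : s ^+ 2 = n%:R by rewrite sqr_sqrtr // ler0n.
have hs0 : 0 <= s by apply: sqrtr_ge0.
have hlt : (2 * a + 1) * (2 * a + 1) < n%:Z * ((2 * b + 1) * (2 * b + 1)).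
  rewrite Ha Hb in Nm; lia.
have hR : ((2 * a + 1) * (2 * a + 1))%:~R < ((n%:Z * ((2 * b + 1) * (2 * b + 1)))%:~R : RR).
  by rewrite ltr_int.
rewrite !(intrD, intrM, intrB) /= in hR.
rewrite -[(n%:Z)%:~R]/(n%:R : RR) in hR.
rewrite intrM !(intrD, intrB) /=.
rewrite -[(n%:Z)%:~R]/(n%:R : RR).
set A := ((a%:~R) : RR) in hR *; set Bb := ((b%:~R) : RR) in hR *.
have hA : 1 <= A by rewrite /A ler1z; lia.
have hB : 0 <= Bb by rewrite /Bb ler0z; lia.
have hn0 : (0 : RR) < n%:R by rewrite ltr0n; lia.
rewrite -hs in hR *.
have f1 : (1%:~R : RR) = 1 := erefl. have fm1 : ((-1)%:~R : RR) = -1 := erefl.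
rewrite ?f1 ?fm1 in hR *.
have spos : 0 < s by rewrite lt_neqAle hs0 andbT; apply/eqP => h0; move: hs; rewrite -h0 expr0n /=; lra.
have ult : 2 * A + 1 < s * (2 * Bb + 1).
  have w0 : 0 <= s * (2 * Bb + 1) by apply: mulr_ge0 => //; lra.
  have [//|hge] := ltrP (2 * A + 1) (s * (2 * Bb + 1)).
  have : (s * (2 * Bb + 1)) * (s * (2 * Bb + 1)) <= (2 * A + 1) * (2 * A + 1).
    by apply: ler_pM.
  rewrite expr2 in hR; move=> hh.
  have : s * s * ((2 * Bb + 1) * (2 * Bb + 1)) = (s * (2 * Bb + 1)) * (s * (2 * Bb + 1)) by ring.
  lra.
nra.
Qed.

Lemma part2 (n : nat) (hn : (10 <= n <= 12)%N) (X Y : 'I_n -> CC) (d : int) (m : 'I_n -> int) :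
       effective X Y d m -> 1 <= chi d m ->
       (exists t : RR, ample X Y t (@E_mul n) /\
          2 * dot t (@E_mul n) (rdeg d) (rmul m) < dot t (@E_mul n) K_deg (@K_mul n)) ->
       exists k : nat, odd k /\ d = dk n k /\ forall i, m i = mk n k.
Proof.
move=> eff hchi [t [[hA1 hA2] hineq]].
have d0 := @effective_dge0 _ _ _ _ _ eff.
have f1 : (1%:~R : RR) = 1 := erefl. have fm1 : ((-1)%:~R : RR) = -1 := erefl.
have f0 : (0%:~R : RR) = 0 := erefl. have fn : ((n%:Z)%:~R : RR) = n%:R := erefl.
have tpos : 0 < t.
  have := hA2 1 (fun _ => 0) (@effective_H n X Y) (fun h => ltac:(by case: h)).
  by rewrite dot_E sum_const_int mulr0 /= f1 f0 mulr1 subr0.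
have tn : n%:R < t * t by move: hA1; rewrite dot_EE; lra.
rewrite chiE in hchi; rewrite dot_E dot_EK in hineq.
set M := \sum_i m i in hchi hineq; set Sq := \sum_i m i * m i in hchi.
have hS : 0 <= d * d - Sq + 3 * d - M.
  rewrite -(ler0z RR) !(intrD, intrM, intrB, intrN) ?f1 ?fm1 ?f0 /=; lra.
have hn0 : (0 : RR) < n%:R by rewrite ltr0n; lia.
have hd0 : (0 : RR) <= d%:~R by rewrite ler0z.
have hx : 0 < n%:Z + 2 * M.
  rewrite -(ltr0z RR) !(intrD, intrM, intrB, intrN) ?f1 ?fm1 ?f0 ?fn /=.
  have : 0 < t * (2 * d%:~R + 3) by apply: mulr_gt0 => //; lra.
  lra.
have hxy : n%:Z * ((2 * d + 3) * (2 * d + 3)) < (n%:Z + 2 * M) * (n%:Z + 2 * M).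
  rewrite -(ltr_int RR) !(intrD, intrM, intrB, intrN) ?f1 ?fm1 ?f0 ?fn /=.
  set D := (d%:~R : RR) in hineq hd0 *; set MM := (M%:~R : RR) in hineq *.
  have h1 : t * (2 * D + (1 + (1 + 1))) < n%:R + (1 + 1) * MM by lra.
  have h2 : 0 < t * (2 * D + (1 + (1 + 1))) by apply: mulr_gt0 => //; lra.
  have h3 : (t * (2 * D + (1 + (1 + 1)))) * (t * (2 * D + (1 + (1 + 1)))) <
            (n%:R + (1 + 1) * MM) * (n%:R + (1 + 1) * MM) by apply: ltr_pM => //; lra.
  have h4 : n%:R * ((2 * D + (1 + (1 + 1))) * (2 * D + (1 + (1 + 1)))) <=
            (t * t) * ((2 * D + (1 + (1 + 1))) * (2 * D + (1 + (1 + 1)))).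
    by apply: ler_pM; [lra | nra | lra | lra].
  have : (t * (2 * D + (1 + (1 + 1)))) * (t * (2 * D + (1 + (1 + 1)))) =
         (t * t) * ((2 * D + (1 + (1 + 1))) * (2 * D + (1 + (1 + 1)))) by ring.
  lra.
have hV := @sum_sq_ge0 n m.
rewrite -/M -/Sq in hV.
have iden : (n%:Z + 2 * M) * (n%:Z + 2 * M) - n%:Z * ((2 * d + 3) * (2 * d + 3)) =
    n%:Z * (n%:Z - 9) - 4 * (n%:Z * Sq - M * M) - 4 * n%:Z * (d * d - Sq + 3 * d - M).
  ring.
have [S0 Vlt] : d * d - Sq + 3 * d - M = 0 /\ n%:Z * Sq - M * M < n%:Z - 1.
  have : n%:Z = 10 \/ n%:Z = 11 \/ n%:Z = 12 by lia.
  case=> [E|[E|E]]; rewrite E in iden hxy hV *; lia.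
have n0 : (0 < n)%N by lia.
pose a : 'I_n := Ordinal n0.
have hu := @uniform_of n m a Vlt.
set ma := m a in hu.
have ME : M = n%:Z * ma.
  by rewrite /M (eq_bigr (fun _ => ma)) ?sum_const_int // => i _; rewrite hu.
have SqE : Sq = n%:Z * (ma * ma).
  by rewrite /Sq (eq_bigr (fun _ => ma * ma)) ?sum_const_int // => i _; rewrite hu.
rewrite ME SqE in S0 hx.
have ma0 : 0 <= ma.
  have : n%:Z = 10 \/ n%:Z = 11 \/ n%:Z = 12 by lia.
  case=> [E|[E|E]]; rewrite E in hx; lia.
have [c [e [hc hce]]] := @nval n hn.
have ev := @e_val n c e hn hc hce.
have [_ Pbwd] := @pell_case c e ev.
have Np : (2 * d + 3) * (2 * d + 3) - (9 + c) * ((2 * ma + 1) * (2 * ma + 1)) = - c.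
  have : (2 * d + 3) * (2 * d + 3) - n%:Z * ((2 * ma + 1) * (2 * ma + 1)) =
     4 * (d * d - n%:Z * (ma * ma) + 3 * d - n%:Z * ma) + 9 - n%:Z by ring.
  rewrite S0 -hc; lia.
have [j uj] := Pbwd (2 * d + 3) (2 * ma + 1) ltac:(lia) ltac:(lia) Np.
have [p' [q' [E _]]] := @conv_odd n c e hn hc hce j.
exists j.*2.+1; split; first by rewrite /= odd_double.
split.
  rewrite /dk /conv_p E uj /= (_ : 2 * d + 3 - 3 = d * 2) ?mulzK //; ring.
move=> i; rewrite hu /mk /conv_q E uj /= (_ : 2 * ma + 1 - 1 = ma * 2) ?mulzK //; ring.
Qed.

Theorem theorem4p8 (n : nat) (hn : (10 <= n <= 12)%N) :
  very_general (fun X Y : 'I_n -> CC =>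
    (* (1) *)
    (forall k : nat, odd k ->
       (2 %| conv_p (Num.sqrt (n%:R)) k - 3)%Z /\
       (2 %| conv_q (Num.sqrt (n%:R)) k - 1)%Z /\
       effective X Y (dk n k) (fun _ => mk n k) /\
       chi (dk n k) (fun _ : 'I_n => mk n k) = 1 /\
       2 * dot (B_deg n) (@E_mul n) (rdeg (dk n k)) (rmul (fun _ : 'I_n => mk n k))
         < dot (B_deg n) (@E_mul n) K_deg (@K_mul n))
    /\
    (* (2) *)
    (forall (d : int) (m : 'I_n -> int),
       effective X Y d m -> 1 <= chi d m ->
       (exists t : RR, ample X Y t (@E_mul n) /\
          2 * dot t (@E_mul n) (rdeg d) (rmul m) < dot t (@E_mul n) K_deg (@K_mul n)) ->
       exists k : nat, odd k /\ d = dk n k /\ forall i, m i = mk n k)).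
Proof.
exists (fun _ => 1); split; first by move=> _; exact: oner_neq0.
move=> X Y _; split.
- by move=> k hk; apply: part1.
- by move=> d m; apply: part2.
Qed.
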